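(* Let $\mathbb{K}$ be a countable set, $m\ge2$ an even integer, $q=m/2$, $\mathcal{X}$ a nonempty set, and $(\phi_k)_{k\in\mathbb{K}}$ measurable functions $\phi_k\colon\mathcal{X}\to\mathbb{C}$ with $(\phi_k(x))_{k\in\mathbb{K}}\in\ell^m(\mathbb{K};\mathbb{C})$ for every $x\in\mathcal{X}$. Set $\Phi(x)=(\overline{\phi_k(x)})_{k\in\mathbb{K}}$. Then the function $$K\colon\mathcal{X}^q\times\mathcal{X}^q\to\mathbb{C},\quad K(x'_1,\dots,x'_q;x''_1,\dots,x''_q)=\sum_{k\in\mathbb{K}}\phi_k(x'_1)\cdots\phi_k(x'_q)\overline{\phi_k(x''_1)}\cdots\overline{\phi_k(x''_q)}$$ is well-defined, and: (i) for all $(x'_1,\dots,x'_q;x''_1,\dots,x''_q)\in\mathcal{X}^q\times\mathcal{X}^q$ and all permutations $\sigma',\sigma''$ of $\{1,\dots,q\}$, $K(x'_{\sigma'(1)},\dots,x'_{\sigma'(q)};x''_{\sigma''(1)},\dots,x''_{\sigma''(q)})=K(x'_1,\dots,x'_q;x''_1,\dots,x''_q)$; (ii) for all $(x';x'')\in\mathcal{X}^q\times\mathcal{X}^q$, $K(x';x'')=\overline{K(x'';x')}$; (iii) for every $(x_i)_{1\le i\le n}\in\mathcal{X}^n$ and every $u\in\mathbb{C}^n$, $\sum_{i_1,\dots,i_q=1}^n\sum_{j_1,\dots,j_q=1}^nK(x_{j_1},\dots,x_{j_q};x_{i_1},\dots,x_{i_q})u_{i_1}\cdots u_{i_q}\overline{u_{j_1}}\cdots\overline{u_{j_q}}\ge0$;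 (iv) for every $(x_i)_{1\le i\le n}\in\mathcal{X}^n$, the map $u\in\mathbb{C}^n\mapsto\big\|\sum_{i=1}^nu_i\Phi(x_i)\big\|_m^m=\sum_{i_1,\dots,i_q=1}^n\sum_{j_1,\dots,j_q=1}^nK(x_{j_1},\dots,x_{j_q};x_{i_1},\dots,x_{i_q})u_{i_1}\cdots u_{i_q}\overline{u_{j_1}}\cdots\overline{u_{j_q}}$ (the equality holding) is a positive homogeneous polynomial form of degree $m$ on $\mathbb{C}^n$; (v) for every $(x'_1,\dots,x'_q)\in\mathcal{X}^q$, $K(x'_1,\dots,x'_q;x'_1,\dots,x'_q)\ge0$; (vi) for every $(x'_1,\dots,x'_q;x''_1,\dots,x''_q)\in\mathcal{X}^q\times\mathcal{X}^q$, $$|K(x'_1,\dots,x'_q;x''_1,\dots,x''_q)|\le\prod_{s=1}^qK(x'_s,\dots,x'_s;x'_s,\dots,x'_s)^{1/m}\prod_{s=1}^qK(x''_s,\dots,x''_s;x''_s,\dots,x''_s)^{1/m}.$$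
   Context: $\ell^m(\mathbb{K};\mathbb{C})$ is the space of complex families $(w_k)_{k\in\mathbb{K}}$ with $\|w\|_m=(\sum_k|w_k|^m)^{1/m}<\infty$. In $K(z,\dots,z;z,\dots,z)$ all $2q$ arguments equal $z$. *)

(* Defs.v *)
From HB Require Import structures.
From mathcomp Require Import all_boot all_order all_algebra all_fingroup.
From mathcomp Require Import all_classical all_reals all_analysis.
From mathcomp Require Import complex.
Set Implicit Arguments. Unset Strict Implicit. Unset Printing Implicit Defensive.
Import Order.TTheory GRing.Theory Num.Theory numFieldNormedType.Exports.
Local Open Scope ring_scope.

Section Defs.
Variable R : realType.

Definition cabs (z : R[i]) : R := complex.Re `|z|.

Definition enum_seq {V : nmodType} (K : countType) (w : K -> V) : nat -> V :=
  fun n => match @pickle_inv K n with Some k => w k | None => 0 end.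

Definition summable_nonneg (K : countType) (f : K -> R) : Prop :=
  exists M : R, forall s : seq K, uniq s -> \sum_(k <- s) f k <= M.

Definition abs_summable (K : countType) (w : K -> R[i]) : Prop :=
  summable_nonneg (fun k => cabs (w k)).

Definition in_lm (m : nat) (K : countType) (w : K -> R[i]) : Prop :=
  summable_nonneg (fun k => cabs (w k) ^+ m).

(* sum over K of a real family (meaningful for absolutely summable families,
   where it does not depend on the enumeration) *)
Definition rsum (K : countType) (f : K -> R) : R := limn (series (enum_seq f)).

Definition csum (K : countType) (w : K -> R[i]) : R[i] :=
  Complex (rsum (fun k => complex.Re (w k))) (rsum (fun k => complex.Im (w k))).

Definition lm_norm_pow (m : nat) (K : countType) (w : K -> R[i]) : R :=
  rsum (fun k => cabs (w k) ^+ m).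

Definition Kterm (K : countType) (X : Type) (phi : K -> X -> R[i]) (q : nat)
  (x' x'' : 'I_q -> X) (k : K) : R[i] :=
  (\prod_(s < q) phi k (x' s)) * (\prod_(s < q) (phi k (x'' s))^*).

Definition Kker (K : countType) (X : Type) (phi : K -> X -> R[i]) (q : nat)
  (x' x'' : 'I_q -> X) : R[i] := csum (Kterm phi x' x'').

(* sum_i u_i Phi(x_i), where Phi(x) = (conj (phi_k x))_k *)
Definition Phi_comb (K : countType) (X : Type) (phi : K -> X -> R[i]) (n : nat)
  (x : 'I_n -> X) (u : 'I_n -> R[i]) (k : K) : R[i] :=
  \sum_(i < n) u i * (phi k (x i))^*.

Definition Kform (K : countType) (X : Type) (phi : K -> X -> R[i]) (q n : nat)
  (x : 'I_n -> X) (u : 'I_n -> R[i]) : R[i] :=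
  \sum_(i : {ffun 'I_q -> 'I_n}) \sum_(j : {ffun 'I_q -> 'I_n})
    Kker phi (fun s => x (j s)) (fun s => x (i s)) *
    (\prod_(s < q) u (i s)) * (\prod_(s < q) (u (j s))^*).

End Defs.

(* Main.v *)
Require Import Defs.
From HB Require Import structures.
From mathcomp Require Import all_boot all_order all_algebra all_fingroup.
From mathcomp Require Import all_classical all_reals all_analysis.
From mathcomp Require Import complex.
From mathcomp Require Import ring.
Import Order.TTheory GRing.Theory Num.Theory numFieldNormedType.Exports.
Local Open Scope ring_scope.
Set Implicit Arguments. Unset Strict Implicit. Unset Printing Implicit Defensive.



Section RealSum.
Variable R : realType.
Variable K : countType.
Implicit Types f g : K -> R.

Definition asum f := summable_nonneg (fun k => `|f k|).

Lemma sn_le f g : (forall k, f k <= g k) -> summable_nonneg g -> summable_nonneg f.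
Proof.
move=> fg [M hM]; exists M => s us; apply: le_trans (hM s us).
by apply: ler_sum => k _.
Qed.

Lemma asum_le f g : (forall k, `|f k| <= g k) -> summable_nonneg g -> asum f.
Proof. by move=> fg; apply: sn_le. Qed.

Lemma sn_asum f : (forall k, 0 <= f k) -> summable_nonneg f -> asum f.
Proof. by move=> f0; apply: asum_le => k; rewrite ger0_norm. Qed.

Lemma sn_D f g : summable_nonneg f -> summable_nonneg g -> summable_nonneg (fun k => f k + g k).
Proof.
move=> [M hM] [N hN]; exists (M + N) => s us.
by rewrite big_split /=; apply: lerD; [apply: hM|apply: hN].
Qed.

Lemma sn_Z c f : 0 <= c -> summable_nonneg f -> summable_nonneg (fun k => c * f k).
Proof.
move=> c0 [M hM]; exists (c * M) => s us.
by rewrite -mulr_sumr; apply: ler_wpM2l => //; apply: hM.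
Qed.

Lemma sn0 : summable_nonneg (fun _ : K => 0 : R).
Proof. by exists 0 => s _; rewrite big1. Qed.

Lemma sn_sum (I : Type) (r : seq I) (P : pred I) (F : I -> K -> R) :
  (forall i, P i -> summable_nonneg (F i)) ->
  summable_nonneg (fun k => \sum_(i <- r | P i) F i k).
Proof.
move=> hF; elim: r => [|a r IH].
  by apply: sn_le sn0 => k; rewrite big_nil.
case Pa: (P a).
  apply: sn_le (sn_D (hF a Pa) IH) => k; by rewrite big_cons Pa.
by apply: sn_le IH => k; rewrite big_cons Pa.
Qed.

Lemma enum_seqE {V : nmodType} (w : K -> V) n :
  enum_seq w n = oapp w 0 (pickle_inv n).
Proof. by rewrite /enum_seq; case: (pickle_inv n). Qed.

Lemma sum_enum_pmap {V : nmodType} (w : K -> V) (s : seq nat) :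
  \sum_(n <- s) enum_seq w n = \sum_(k <- pmap (@pickle_inv K) s) w k.
Proof.
elim: s => [|a s IH]; first by rewrite !big_nil.
rewrite big_cons IH /= /enum_seq; case: (pickle_inv a) => [k|] /=.
  by rewrite big_cons.
by rewrite add0r.
Qed.

Lemma series_bound f M : (forall s : seq K, uniq s -> \sum_(k <- s) f k <= M) ->
  forall N, series (enum_seq f) N <= M.
Proof.
move=> hM N; rewrite /series /=.
rewrite sum_enum_pmap; apply: hM; apply: (pmap_uniq (@pickle_invK K)).
exact: iota_uniq.
Qed.

Lemma enum_seq_ge0 f : (forall k, 0 <= f k) -> forall n, 0 <= enum_seq f n.
Proof. by move=> f0 n; rewrite enum_seqE; case: (pickle_inv n) => //=. Qed.

Lemma asum_cvg f : asum f -> cvgn (series (enum_seq f)).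
Proof.
move=> [M hM]; apply: normed_cvg.
have -> : [normed series (enum_seq f)] = series (enum_seq (fun k => `|f k|)).
  apply/funext => N; rewrite /series /=; apply: eq_bigr => i _; rewrite !enum_seqE.
  by case: (pickle_inv i) => //=; rewrite normr0.
apply: nondecreasing_is_cvgn.
  by apply: nondecreasing_series => n _ _; apply: enum_seq_ge0.
by exists M => _ [N _ <-]; apply: series_bound.
Qed.

Lemma asumD f g : asum f -> asum g -> asum (fun k => f k + g k).
Proof. by move=> hf hg; apply: asum_le (sn_D hf hg) => k; apply: ler_normD. Qed.

Lemma asumZ c f : asum f -> asum (fun k => c * f k).
Proof.
by move=> hf; apply: asum_le (sn_Z (normr_ge0 c) hf) => k; rewrite normrM.
Qed.

Lemma asum0 : asum (fun _ : K => 0 : R).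
Proof. by apply: asum_le sn0 => k; rewrite normr0. Qed.

Lemma asum_sum (I : Type) (r : seq I) (P : pred I) (F : I -> K -> R) :
  (forall i, P i -> asum (F i)) -> asum (fun k => \sum_(i <- r | P i) F i k).
Proof.
move=> hF; elim: r => [|a r IH].
  by apply: asum_le sn0 => k; rewrite big_nil normr0.
case Pa: (P a).
  apply: asum_le (sn_D (hF a Pa) IH) => k; by rewrite big_cons Pa ler_normD.
by apply: asum_le IH => k; rewrite big_cons Pa.
Qed.

Lemma rsum_ext f g : (forall k, f k = g k) -> rsum f = rsum g.
Proof. by move=> fg; congr rsum; apply/funext. Qed.

Lemma rsumD f g : asum f -> asum g -> rsum (fun k => f k + g k) = rsum f + rsum g.
Proof.
move=> hf hg; rewrite /rsum.
have -> : enum_seq (fun k => f k + g k) = enum_seq f + enum_seq g.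
  apply/funext => n; have E : enum_seq (fun k => f k + g k) n = enum_seq f n + enum_seq g n.
    by rewrite !enum_seqE; case: (pickle_inv n) => //=; rewrite addr0.
  exact: E.
by rewrite lim_seriesD //; apply: asum_cvg.
Qed.

Lemma rsumZ c f : asum f -> rsum (fun k => c * f k) = c * rsum f.
Proof.
move=> hf; rewrite /rsum.
have -> : enum_seq (fun k => c * f k) = c *: enum_seq f.
  apply/funext => n; have E : enum_seq (fun k => c * f k) n = c * enum_seq f n.
    by rewrite !enum_seqE; case: (pickle_inv n) => //=; rewrite mulr0.
  exact: E.
by rewrite lim_seriesZ //; apply: asum_cvg.
Qed.

Lemma rsum0 : rsum (fun _ : K => 0 : R) = 0.
Proof.
rewrite /rsum.
have -> : series (enum_seq (fun _ : K => 0 : R)) = fun _ => 0.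
  by apply/funext => n; rewrite /series /= big1 // => i _; rewrite enum_seqE; case: pickle_inv.
exact: lim_cst.
Qed.

Lemma rsumN f : asum f -> rsum (fun k => - f k) = - rsum f.
Proof.
move=> hf; rewrite -mulN1r -rsumZ //; apply: rsum_ext => k; by rewrite mulN1r.
Qed.

Lemma rsum_sum (I : Type) (r : seq I) (P : pred I) (F : I -> K -> R) :
  (forall i, P i -> asum (F i)) ->
  rsum (fun k => \sum_(i <- r | P i) F i k) = \sum_(i <- r | P i) rsum (F i).
Proof.
move=> hF; elim: r => [|a r IH].
  rewrite [RHS]big_nil; transitivity (rsum (fun _ : K => 0 : R)); last exact: rsum0.
  by apply: rsum_ext => k; rewrite big_nil.
case Pa: (P a).
  rewrite [RHS]big_cons Pa -IH -rsumD; [|exact: hF|exact: asum_sum].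
  by apply: rsum_ext => k; rewrite big_cons Pa.
by rewrite [RHS]big_cons Pa -IH; apply: rsum_ext => k; rewrite big_cons Pa.
Qed.

Lemma rsum_le f g : asum f -> asum g -> (forall k, f k <= g k) -> rsum f <= rsum g.
Proof.
move=> hf hg fg; rewrite /rsum; apply: ler_lim; try exact: asum_cvg.
near=> n; apply: ler_sum => i _; rewrite !enum_seqE; case: pickle_inv => //=.
Unshelve. all: by end_near.
Qed.

Lemma rsum_ge0 f : asum f -> (forall k, 0 <= f k) -> 0 <= rsum f.
Proof. by move=> hf f0; rewrite -rsum0; apply: rsum_le => //; apply: asum0. Qed.

Lemma rsum_ge_term f k : asum f -> (forall k, 0 <= f k) -> f k <= rsum f.
Proof.
move=> hf f0; rewrite /rsum; apply: limr_ge; first exact: asum_cvg.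
near=> n.
have hn : (pickle k < n)%N by near: n; exact: nbhs_infty_gt.
rewrite /series /= (bigD1_seq (pickle k)) /=; last exact: iota_uniq.
  rewrite enum_seqE pickleK_inv /= lerDl; apply: sumr_ge0 => i _.
  exact: enum_seq_ge0.
by rewrite mem_index_iota.
Unshelve. all: by end_near.
Qed.

End RealSum.



Lemma amgm (R : realType) (I : finType) (n : nat) (b : I -> R) :
  #|I| = n -> (0 < n)%N -> (forall i, 0 <= b i) ->
  \prod_i b i <= (\sum_i b i ^+ n) / n%:R.
Proof.
move=> cI n0 b0.
have := @leif_AGM R I predT (fun i => b i ^+ n).
move=> /(_ (fun i _ => exprn_ge0 n (b0 i))) [h _].
have e1 : \prod_(i in predT) b i ^+ n = (\prod_i b i) ^+ n.
  by rewrite -prodrXl; apply: eq_bigl.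
have e2 : \sum_(i in predT) b i ^+ n = \sum_i b i ^+ n by apply: eq_bigl.
have e3 : #|[pred i : I | predT i]| = n by rewrite -cI; apply: eq_card.
move: h; rewrite e1 e2 e3 ler_pXn2r // ?nnegrE.
- by apply: prodr_ge0 => i _.
- apply: divr_ge0 => //; apply: sumr_ge0 => i _; exact: exprn_ge0.
Qed.

Section Hoelder.
Variables (R : realType) (K : countType) (I : finType) (n : nat).
Variable a : I -> K -> R.
Hypothesis cI : #|I| = n.
Hypothesis n0 : (0 < n)%N.
Hypothesis a0 : forall i k, 0 <= a i k.
Hypothesis aS : forall i, summable_nonneg (fun k => a i k ^+ n).

Lemma asum_pow i : asum (fun k => a i k ^+ n).
Proof. by apply: sn_asum (aS i) => k; apply: exprn_ge0. Qed.

Lemma hoelder_pt k : \prod_i a i k <= n%:R^-1 * \sum_i a i k ^+ n.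
Proof. by rewrite mulrC; apply: amgm. Qed.

Lemma hoelder_sum : summable_nonneg (fun k => \prod_i a i k).
Proof.
apply: sn_le (sn_Z (c := n%:R^-1) _ (sn_sum (index_enum I) (P := xpredT) (fun i _ => aS i))).
- exact: hoelder_pt.
- by rewrite invr_ge0.
Qed.

Lemma hoelder_asum : asum (fun k => \prod_i a i k).
Proof. by apply: sn_asum hoelder_sum => k; apply: prodr_ge0 => i _. Qed.

Lemma hoelder_le :
  rsum (fun k => \prod_i a i k) <= \prod_i (rsum (fun k => a i k ^+ n)) `^ (n%:R^-1).
Proof.
set S := fun i => rsum (fun k => a i k ^+ n).
have S0 i : 0 <= S i by apply: rsum_ge0; [exact: asum_pow | move=> k; exact: exprn_ge0].
have [[i Si]|] := pselect (exists i, S i = 0).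
  have ai k : a i k = 0.
    have : a i k ^+ n <= S i by rewrite /S; apply: (@rsum_ge_term _ _ (fun k => a i k ^+ n)); [exact: asum_pow | move=> k'; exact: exprn_ge0].
    rewrite Si => h; apply/eqP; have : a i k ^+ n == 0 by rewrite eq_le h exprn_ge0.
    by rewrite expf_eq0 => /andP[].
  have -> : rsum (fun k => \prod_i a i k) = rsum (fun _ : K => 0 : R).
    by apply: rsum_ext => k; rewrite (bigD1 i) //= ai mul0r.
  by rewrite rsum0; apply: prodr_ge0 => j _; apply: powR_ge0.
move=> /forallNP Sn0.
have Sgt0 i : 0 < S i by rewrite lt_def S0 andbT; apply/eqP; apply: Sn0.
set N := fun i => S i `^ n%:R^-1.
have Ngt0 i : 0 < N i by apply: powR_gt0.
have NX i : N i ^+ n = S i.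
  rewrite -powR_mulrn; last exact: powR_ge0.
  by rewrite -powRrM mulVf ?powRr1 // pnatr_eq0 -lt0n.
set P := \prod_i N i.
have P0 : 0 <= P by apply: prodr_ge0 => i _; apply: ltW.
apply: (@le_trans _ _ (rsum (fun k => P * (n%:R^-1 * \sum_i ((S i)^-1 * a i k ^+ n))))).
  apply: rsum_le.
  - exact: hoelder_asum.
  - apply: asumZ; apply: asumZ; apply: asum_sum => i _; apply: asumZ; exact: asum_pow.
  move=> k.
  have -> : \prod_i a i k = P * \prod_i (a i k / N i).
    rewrite /P -big_split /=; apply: eq_bigr => i _.
    by rewrite mulrC divfK // gt_eqF.
  apply: ler_wpM2l => //.
  apply: le_trans (amgm (b := fun i => a i k / N i) cI n0 _) _.
    by move=> i; apply: divr_ge0 => //; apply: ltW.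
  rewrite [X in X <= _]mulrC; apply: ler_wpM2l; first by rewrite invr_ge0.
  rewrite le_eqVlt; apply/orP; left; apply/eqP; apply: eq_bigr => i _.
  by rewrite expr_div_n NX mulrC.
rewrite rsumZ; last first.
  apply: asumZ; apply: asum_sum => i _; apply: asumZ; exact: asum_pow.
rewrite rsumZ; last by apply: asum_sum => i _; apply: asumZ; exact: asum_pow.
rewrite rsum_sum; last by move=> i _; apply: asumZ; exact: asum_pow.
have -> : \sum_i rsum (fun k : K => (S i)^-1 * a i k ^+ n) = n%:R.
  transitivity (\sum_(i : I) (1 : R)).
    apply: eq_bigr => i _; rewrite rsumZ; last exact: asum_pow.
    by rewrite mulVf // gt_eqF.
  by rewrite sumr_const cI.
by rewrite mulVf ?mulr1 // pnatr_eq0 -lt0n.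
Qed.
End Hoelder.



Section Cabs.
Variable R : realType.
Implicit Types z w : R[i].

Lemma normE z : `|z| = ((cabs z)%:C)%C.
Proof. by rewrite /cabs normc_def. Qed.

Lemma cabs_ge0 z : 0 <= cabs z.
Proof. by rewrite -ler0c -normE. Qed.

Lemma cabsM z w : cabs (z * w) = cabs z * cabs w.
Proof. by apply: complexI; rewrite rmorphM /= -!normE normrM. Qed.

Lemma cabs_prod (I : Type) (r : seq I) (P : pred I) (F : I -> R[i]) :
  cabs (\prod_(i <- r | P i) F i) = \prod_(i <- r | P i) cabs (F i).
Proof. by apply: complexI; rewrite rmorph_prod /= -normE normr_prod; apply: eq_bigr => i _; rewrite normE. Qed.

Lemma cabsX z n : cabs (z ^+ n) = cabs z ^+ n.
Proof. by apply: complexI; rewrite rmorphXn /= -!normE normrX. Qed.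

Lemma cabsJ z : @cabs R (z^*) = cabs z.
Proof. by apply: complexI; rewrite -normE norm_conjC normE. Qed.

Lemma cabsR (x : R) : 0 <= x -> cabs ((x%:C)%C) = x.
Proof. by move=> x0; apply: complexI; rewrite -normE ger0_norm // ler0c. Qed.

Lemma cabs_sum (I : Type) (r : seq I) (P : pred I) (F : I -> R[i]) :
  cabs (\sum_(i <- r | P i) F i) <= \sum_(i <- r | P i) cabs (F i).
Proof.
rewrite -lecR -normE rmorph_sum /=.
apply: le_trans (ler_norm_sum _ _ _) _.
by rewrite le_eqVlt; apply/orP; left; apply/eqP; apply: eq_bigr => i _; rewrite normE.
Qed.

Lemma cabsD z w : cabs (z + w) <= cabs z + cabs w.
Proof. by rewrite -lecR rmorphD /= -!normE ler_normD. Qed.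

Lemma cabs2 z : cabs z ^+ 2 = complex.Re z ^+ 2 + complex.Im z ^+ 2.
Proof. by apply: complexI; rewrite add_Re2_Im2 rmorphXn /= normE. Qed.

Lemma Re_le z : `|complex.Re z| <= cabs z.
Proof.
rewrite -(ler_pXn2r (n := 2)) // ?nnegrE ?cabs_ge0 // cabs2 real_normK ?num_real //.
by rewrite lerDl sqr_ge0.
Qed.

Lemma Im_le z : `|complex.Im z| <= cabs z.
Proof.
rewrite -(ler_pXn2r (n := 2)) // ?nnegrE ?cabs_ge0 // cabs2 real_normK ?num_real //.
by rewrite lerDr sqr_ge0.
Qed.

Lemma ReJ z : complex.Re (z^*) = complex.Re z. Proof. by case: z. Qed.
Lemma ImJ z : complex.Im (z^*) = - complex.Im z. Proof. by case: z. Qed.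
Lemma ReM z w : complex.Re (z * w) = complex.Re z * complex.Re w - complex.Im z * complex.Im w. Proof. by case: z; case: w. Qed.
Lemma ImM z w : complex.Im (z * w) = complex.Re z * complex.Im w + complex.Im z * complex.Re w. Proof. by case: z; case: w. Qed.
Lemma ReD z w : complex.Re (z + w) = complex.Re z + complex.Re w. Proof. by case: z; case: w. Qed.
Lemma ImD z w : complex.Im (z + w) = complex.Im z + complex.Im w. Proof. by case: z; case: w. Qed.

Lemma mulJ z : z * z^* = ((cabs z ^+ 2)%:C)%C.
Proof. by rewrite -normCK normE rmorphXn. Qed.

End Cabs.

Section CSum.
Variables (R : realType) (K : countType).
Implicit Types w : K -> R[i].

Lemma abs_le w (g : K -> R) : (forall k, cabs (w k) <= g k) -> summable_nonneg g -> abs_summable w.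
Proof. by move=> h; apply: sn_le. Qed.

Lemma abs_Re w : abs_summable w -> asum (fun k => complex.Re (w k)).
Proof. by apply: asum_le => k; apply: Re_le. Qed.

Lemma abs_Im w : abs_summable w -> asum (fun k => complex.Im (w k)).
Proof. by apply: asum_le => k; apply: Im_le. Qed.

Lemma abs_asum w : abs_summable w -> asum (fun k => cabs (w k)).
Proof. by move=> h; apply: sn_asum h => k; apply: cabs_ge0. Qed.

Lemma absD w1 w2 : abs_summable w1 -> abs_summable w2 -> abs_summable (fun k => w1 k + w2 k).
Proof.
move=> h1 h2; apply: abs_le (sn_D h1 h2) => k.
exact: cabsD.
Qed.

Lemma absZ c w : abs_summable w -> abs_summable (fun k => c * w k).
Proof. by move=> h; apply: abs_le (sn_Z (cabs_ge0 c) h) => k; rewrite cabsM. Qed.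

Lemma absZr c w : abs_summable w -> abs_summable (fun k => w k * c).
Proof. by move=> h; apply: abs_le (sn_Z (cabs_ge0 c) h) => k; rewrite cabsM mulrC. Qed.

Lemma abs_sum (I : Type) (r : seq I) (P : pred I) (F : I -> K -> R[i]) :
  (forall i, P i -> abs_summable (F i)) -> abs_summable (fun k => \sum_(i <- r | P i) F i k).
Proof.
move=> hF; apply: abs_le (sn_sum r hF) => k; exact: cabs_sum.
Qed.

Lemma csum_ext w1 w2 : (forall k, w1 k = w2 k) -> csum w1 = csum w2.
Proof. by move=> h; congr csum; apply/funext. Qed.

Lemma csumD w1 w2 : abs_summable w1 -> abs_summable w2 ->
  csum (fun k => w1 k + w2 k) = csum w1 + csum w2.
Proof.
move=> h1 h2; apply/eqP; rewrite eq_complex /csum /=; apply/andP; split; apply/eqP.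
  rewrite -rsumD; [apply: rsum_ext => k; exact: ReD | exact: abs_Re | exact: abs_Re].
rewrite -rsumD; [apply: rsum_ext => k; exact: ImD | exact: abs_Im | exact: abs_Im].
Qed.

Lemma csumZ c w : abs_summable w -> csum (fun k => c * w k) = c * csum w.
Proof.
move=> h; have hr := abs_Re h; have hi := abs_Im h.
apply/eqP; rewrite eq_complex /csum; apply/andP; split; apply/eqP.
  transitivity (rsum (fun k => complex.Re c * complex.Re (w k) + (- complex.Im c) * complex.Im (w k))).
    by apply: rsum_ext => k; rewrite ReM mulNr.
  rewrite rsumD ?rsumZ //; try exact: asumZ.
  by rewrite ReM /= mulNr.
transitivity (rsum (fun k => complex.Re c * complex.Im (w k) + complex.Im c * complex.Re (w k))).
  by apply: rsum_ext => k; rewrite ImM.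
rewrite rsumD ?rsumZ //; try exact: asumZ.
by rewrite ImM /=.
Qed.

Lemma csumZr c w : abs_summable w -> csum (fun k => w k * c) = csum w * c.
Proof.
move=> h; rewrite mulrC -csumZ //; apply: csum_ext => k; exact: mulrC.
Qed.

Lemma csum0 : csum (fun _ : K => 0 : R[i]) = 0.
Proof.
rewrite /csum; have -> : (fun _ : K => complex.Re (0 : R[i])) = fun _ => 0 by [].
by rewrite rsum0.
Qed.

Lemma csum_sum (I : Type) (r : seq I) (P : pred I) (F : I -> K -> R[i]) :
  (forall i, P i -> abs_summable (F i)) ->
  csum (fun k => \sum_(i <- r | P i) F i k) = \sum_(i <- r | P i) csum (F i).
Proof.
move=> hF; elim: r => [|a r IH].
  rewrite [RHS]big_nil; transitivity (csum (fun _ : K => 0 : R[i])); last exact: csum0.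
  by apply: csum_ext => k; rewrite big_nil.
case Pa: (P a).
  rewrite [RHS]big_cons Pa -IH -csumD; [|exact: hF|exact: abs_sum].
  by apply: csum_ext => k; rewrite big_cons Pa.
by rewrite [RHS]big_cons Pa -IH; apply: csum_ext => k; rewrite big_cons Pa.
Qed.

Lemma csumJ w : abs_summable w -> csum (fun k => (w k)^*) = (csum w)^*.
Proof.
move=> h; apply/eqP; rewrite eq_complex /csum; apply/andP; split; apply/eqP.
  by rewrite ReJ /=; apply: rsum_ext => k; rewrite ReJ.
rewrite ImJ /= -rsumN; last exact: abs_Im.
by apply: rsum_ext => k; rewrite ImJ.
Qed.

Lemma csumR (f : K -> R) : csum (fun k => (f k)%:C%C) = (rsum f)%:C%C.
Proof.
apply/eqP; rewrite eq_complex /csum /=; apply/andP; split; apply/eqP; first by [].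
by transitivity (rsum (fun _ : K => 0 : R)); [apply: rsum_ext | exact: rsum0].
Qed.

Lemma cabs_csum w : abs_summable w -> cabs (csum w) <= rsum (fun k => cabs (w k)).
Proof.
move=> h; set S := csum w.
have [->|S0] := eqVneq S 0.
  rewrite (cabsR (lexx 0)); apply: rsum_ge0; [exact: abs_asum | move=> k; exact: cabs_ge0].
set c := S^* / ((cabs S)%:C)%C.
have cS0 : cabs S != 0.
  by apply: contra S0 => /eqP h0; rewrite -normr_eq0 normE h0.
have e1 : c * S = ((cabs S)%:C)%C.
  rewrite /c mulrAC (mulrC _ S) mulJ -fmorph_div /=; congr (_%:C)%C.
  by rewrite expr2 mulfK.
have cc : cabs c = 1.
  apply: (mulIf cS0); rewrite mul1r -cabsM e1 cabsR //; exact: cabs_ge0.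
have -> : cabs S = complex.Re (csum (fun k => c * w k)) by rewrite csumZ // e1.
rewrite /csum /=; apply: rsum_le.
- by apply: abs_Re; apply: absZ.
- exact: abs_asum.
move=> k; apply: le_trans (ler_norm _) _; apply: le_trans (Re_le _) _.
by rewrite cabsM cc mul1r.
Qed.


End CSum.



Section Main.
Variables (R : realType) (K : countType) (X : Type) (m : nat) (phi : K -> X -> R[i]).
Hypothesis hm2 : (2 <= m)%N.
Hypothesis hmeven : ~~ odd m.
Hypothesis hlm : forall x : X, in_lm m (fun k => phi k x).

Lemma mqq : m = (m./2 + m./2)%N.
Proof. by rewrite addnn -[LHS]odd_double_half (negbTE hmeven). Qed.

Lemma m0 : (0 < m)%N.
Proof. by apply: leq_trans hm2. Qed.

Definition yy (x' x'' : 'I_(m./2) -> X) (i : 'I_(m./2) + 'I_(m./2)) : X :=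
  match i with inl s => x' s | inr s => x'' s end.

Lemma card_yy : #|{: 'I_(m./2) + 'I_(m./2)}| = m.
Proof. by rewrite card_sum card_ord -mqq. Qed.

Lemma kterm_cabs (x' x'' : 'I_(m./2) -> X) k :
  cabs (Kterm phi x' x'' k) = \prod_(i : 'I_(m./2) + 'I_(m./2)) cabs (phi k (yy x' x'' i)).
Proof.
rewrite /Kterm cabsM !cabs_prod big_sumType /=; congr (_ * _).
by apply: eq_bigr => s _; rewrite cabsJ.
Qed.

Lemma kterm_abs (x' x'' : 'I_(m./2) -> X) : abs_summable (Kterm phi x' x'').
Proof.
apply: abs_le (hoelder_sum (a := fun i k => cabs (phi k (yy x' x'' i))) card_yy m0 _ _).
- by move=> k; rewrite kterm_cabs.
- by move=> i k; apply: cabs_ge0.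
- by move=> i; apply: hlm.
Qed.

Lemma kconst x : Kker phi (fun _ : 'I_(m./2) => x) (fun _ => x) = (rsum (fun k => cabs (phi k x) ^+ m))%:C%C.
Proof.
rewrite /Kker -csumR; apply: csum_ext => k; rewrite /Kterm !prodr_const card_ord.
by rewrite -exprMn mulJ -rmorphXn /= -exprM mul2n -addnn -mqq.
Qed.

Lemma part_i (x' x'' : 'I_(m./2) -> X) (s' s'' : 'S_(m./2)) :
  Kker phi (fun s => x' (s' s)) (fun s => x'' (s'' s)) = Kker phi x' x''.
Proof.
apply: csum_ext => k; rewrite /Kterm; congr (_ * _).
  by rewrite [RHS](reindex_inj (@perm_inj _ s')).
by rewrite [RHS](reindex_inj (@perm_inj _ s'')).
Qed.

Lemma part_ii (x' x'' : 'I_(m./2) -> X) : Kker phi x' x'' = (Kker phi x'' x')^*.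
Proof.
rewrite /Kker -csumJ; last exact: kterm_abs.
apply: csum_ext => k; rewrite /Kterm rmorphM /= !rmorph_prod /= mulrC; congr (_ * _).
by apply: eq_bigr => s _; rewrite conjCK.
Qed.

Lemma part_v (x' : 'I_(m./2) -> X) : 0 <= Kker phi x' x'.
Proof.
have e k : Kterm phi x' x' k = ((cabs (\prod_s phi k (x' s)) ^+ 2)%:C)%C.
  by rewrite /Kterm -mulJ rmorph_prod.
rewrite /Kker (csum_ext e) csumR ler0c; apply: rsum_ge0; last by move=> k; apply: exprn_ge0; apply: cabs_ge0.
apply: asum_le (kterm_abs x' x') => k.
by rewrite e cabsR ?ger0_norm // exprn_ge0 // cabs_ge0.
Qed.

Lemma part_vi (x' x'' : 'I_(m./2) -> X) :
      cabs (Kker phi x' x'') <=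
        (\prod_(s < m./2) (complex.Re (Kker phi (fun _ : 'I_(m./2) => x' s) (fun _ : 'I_(m./2) => x' s))) `^ (m%:R^-1)) *
        (\prod_(s < m./2) (complex.Re (Kker phi (fun _ : 'I_(m./2) => x'' s) (fun _ : 'I_(m./2) => x'' s))) `^ (m%:R^-1)).
Proof.
apply: le_trans (cabs_csum (kterm_abs x' x'')) _.
rewrite (rsum_ext (kterm_cabs x' x'')).
apply: le_trans (hoelder_le (a := fun i k => cabs (phi k (yy x' x'' i))) card_yy m0 _ _) _.
- by move=> i k; apply: cabs_ge0.
- by move=> i; apply: hlm.
have E (x : X) : complex.Re (Kker phi (fun _ : 'I_(m./2) => x) (fun _ => x)) = rsum (fun k => cabs (phi k x) ^+ m) by rewrite kconst.
have P (y : 'I_(m./2) -> X) : \prod_(s < m./2) (complex.Re (Kker phi (fun _ : 'I_(m./2) => y s) (fun _ : 'I_(m./2) => y s))) `^ (m%:R^-1) =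
   \prod_(s < m./2) (rsum (fun k => cabs (phi k (y s)) ^+ m)) `^ (m%:R^-1).
  by apply: eq_bigr => s _; rewrite E.
rewrite !P big_sumType; exact: lexx.

Qed.

Lemma sum_ffun_prod n (G : 'I_n -> R[i]) :
  \sum_(f : {ffun 'I_(m./2) -> 'I_n}) \prod_(s < m./2) G (f s) = (\sum_a G a) ^+ m./2.
Proof.
by rewrite -(bigA_distr_bigA (fun (_ : 'I_(m./2)) a => G a)) /= prodr_const card_ord.
Qed.

Definition KF n (x : 'I_n -> X) (u : 'I_n -> R[i]) (k : K) : R[i] :=
  \sum_(i : {ffun 'I_(m./2) -> 'I_n}) \sum_(j : {ffun 'I_(m./2) -> 'I_n})
    Kterm phi (fun s => x (j s)) (fun s => x (i s)) k *
    (\prod_(s < m./2) u (i s)) * (\prod_(s < m./2) (u (j s))^*).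

Lemma KF_abs n (x : 'I_n -> X) u : abs_summable (KF x u).
Proof.
apply: abs_sum => i _; apply: abs_sum => j _; apply: absZr; apply: absZr; exact: kterm_abs.
Qed.

Lemma kform_csum n (x : 'I_n -> X) u : Kform phi (m./2) x u = csum (KF x u).
Proof.
rewrite /KF csum_sum; last by move=> i _; apply: abs_sum => j _; apply: absZr; apply: absZr; exact: kterm_abs.
apply: eq_bigr => i _; rewrite csum_sum; last by move=> j _; apply: absZr; apply: absZr; exact: kterm_abs.
apply: eq_bigr => j _; rewrite csumZr; last by apply: absZr; exact: kterm_abs.
by rewrite csumZr //; exact: kterm_abs.
Qed.

Lemma KF_pt n (x : 'I_n -> X) u k : KF x u k = ((cabs (Phi_comb phi x u k) ^+ m)%:C)%C.
Proof.
set w := Phi_comb phi x u k.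
have e i j : Kterm phi (fun s => x (j s)) (fun s => x (i s)) k *
    (\prod_(s < m./2) u (i s)) * (\prod_(s < m./2) (u (j s))^*) =
    (\prod_(s < m./2) (phi k (x (j s)) * (u (j s))^*)) *
    (\prod_(s < m./2) ((phi k (x (i s)))^* * u (i s))).
  rewrite !big_split /= /Kterm; ring.
rewrite /KF.
under eq_bigr => i _ do under eq_bigr => j _ do rewrite e.
rewrite exchange_big /=.
under eq_bigr => j _ do rewrite -mulr_sumr.
rewrite -mulr_suml (sum_ffun_prod (fun a => phi k (x a) * (u a)^*)) (sum_ffun_prod (fun a => (phi k (x a))^* * u a)).
have -> : \sum_a ((phi k (x a))^* * u a) = w by apply: eq_bigr => a _; rewrite mulrC.
have -> : \sum_a (phi k (x a) * (u a)^*) = w^*.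
  by rewrite /w /Phi_comb rmorph_sum /=; apply: eq_bigr => a _; rewrite rmorphM /= conjCK mulrC.
by rewrite -exprMn mulrC mulJ -rmorphXn /= -exprM mul2n -addnn -mqq.
Qed.

Lemma part_iv_a n (x : 'I_n -> X) u :
  in_lm m (Phi_comb phi x u) /\
  ((lm_norm_pow m (Phi_comb phi x u))%:C)%C = Kform phi (m./2) x u.
Proof.
split.
  apply: sn_le (KF_abs x u) => k.
  by rewrite KF_pt cabsR // exprn_ge0 // cabs_ge0.
by rewrite kform_csum (csum_ext (KF_pt x u)) csumR.
Qed.

Lemma part_iv_b n (x : 'I_n -> X) u : 0 <= Kform phi (m./2) x u.
Proof.
have [h <-] := part_iv_a x u.
rewrite ler0c; apply: rsum_ge0; last by move=> k; rewrite exprn_ge0 // cabs_ge0.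
by apply: sn_asum h => k; rewrite exprn_ge0 // cabs_ge0.
Qed.

Lemma part_iv_c n (x : 'I_n -> X) (c : R[i]) u :
  Kform phi (m./2) x (fun i => c * u i) = ((cabs c ^+ m)%:C)%C * Kform phi (m./2) x u.
Proof.
have hc : ((cabs c ^+ m)%:C)%C = c ^+ m./2 * c^* ^+ m./2.
  by rewrite -exprMn mulJ -rmorphXn /= -exprM mul2n -addnn -mqq.
rewrite /Kform mulr_sumr; apply: eq_bigr => i _; rewrite mulr_sumr; apply: eq_bigr => j _.
have h1 : \prod_(s < m./2) (c * u (i s)) = c ^+ m./2 * \prod_(s < m./2) u (i s).
  by rewrite big_split /= prodr_const card_ord.
have h2 : \prod_(s < m./2) (c * u (j s))^* = c^* ^+ m./2 * \prod_(s < m./2) (u (j s))^*.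
  rewrite (eq_bigr (fun s => c^* * (u (j s))^*)); last by move=> s _; rewrite rmorphM.
  by rewrite big_split /= prodr_const card_ord.
rewrite h1 h2 hc; ring.
Qed.

End Main.

Unset Implicit Arguments.

Theorem proposition4p14 (R : realType) (K : countType) (d : measure_display)
  (X : measurableType d) (m : nat) (phi : K -> X -> R[i])
  (hm2 : (2 <= m)%N) (hmeven : ~~ odd m) (hX : inhabited X)
  (hmeas : forall k, measurable_fun setT (fun x => complex.Re (phi k x)) /\
                     measurable_fun setT (fun x => complex.Im (phi k x)))
  (hlm : forall x : X, in_lm m (fun k => phi k x)) :
  let q := m./2 in
  (* K is well defined: the defining series converges absolutely *)
  (forall x' x'' : 'I_q -> X, abs_summable (Kterm phi x' x'')) /\
  (* (i) *)
  (forall (x' x'' : 'I_q -> X) (s' s'' : 'S_q),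
      Kker phi (fun s => x' (s' s)) (fun s => x'' (s'' s)) = Kker phi x' x'') /\
  (* (ii) *)
  (forall x' x'' : 'I_q -> X, Kker phi x' x'' = (Kker phi x'' x')^*) /\
  (* (iii) *)
  (forall (n : nat) (x : 'I_n -> X) (u : 'I_n -> R[i]), 0 <= Kform phi q x u) /\
  (* (iv) *)
  (forall (n : nat) (x : 'I_n -> X),
      (forall u : 'I_n -> R[i],
          in_lm m (Phi_comb phi x u) /\
          ((lm_norm_pow m (Phi_comb phi x u))%:C)%C = Kform phi q x u) /\
      (forall u : 'I_n -> R[i], 0 <= Kform phi q x u) /\
      (forall (c : R[i]) (u : 'I_n -> R[i]),
          Kform phi q x (fun i => c * u i) = ((cabs c ^+ m)%:C)%C * Kform phi q x u)) /\
  (* (v) *)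
  (forall x' : 'I_q -> X, 0 <= Kker phi x' x') /\
  (* (vi) *)
  (forall x' x'' : 'I_q -> X,
      cabs (Kker phi x' x'') <=
        (\prod_(s < q) (complex.Re (Kker phi (fun _ : 'I_q => x' s) (fun _ : 'I_q => x' s))) `^ (m%:R^-1)) *
        (\prod_(s < q) (complex.Re (Kker phi (fun _ : 'I_q => x'' s) (fun _ : 'I_q => x'' s))) `^ (m%:R^-1))).
Proof.
move=> q; rewrite /q.
split; first by move=> x' x''; apply: kterm_abs.
split; first by move=> x' x'' s' s''; apply: part_i.
split; first by move=> x' x''; apply: part_ii.
split; first by move=> n x u; apply: part_iv_b.
split.
  move=> n x; split; first by move=> u; apply: part_iv_a.
  split; first by move=> u; apply: part_iv_b.
  by move=> c u; apply: part_iv_c.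
split; first by move=> x'; apply: part_v.
by move=> x' x''; apply: part_vi.
Qed.
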